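(* Let $A$ be a real $n\times n$ nonsingular skew-symmetric matrix ($A^t=-A$) and $b\in\mathbb{R}^n$. For each integer $q\ge 0$: (i) The CGNE iterate $x^E_q$, i.e. the unique vector $x^E_q\in\mathcal{K}_q(A^2,Ab)$ satisfying $p^t(b-Ax^E_q)=0$ for all $p\in\mathcal{K}_q(A^2,b)$, lies in $\mathcal{K}_{2q}(A,b)$ and satisfies the Galerkin condition $p^t(b-Ax^E_q)=0$ for all $p\in\mathcal{K}_{2q}(A,b)$. Consequently the Galerkin iterate $x^G_{2q}$ (the unique vector in $\mathcal{K}_{2q}(A,b)$ satisfying this Galerkin condition) equals $x^E_q$. (ii) The CGNR iterate $x^R_q=\operatorname{argmin}_{z\in\mathcal{K}_q(A^2,Ab)}\|b-Az\|$ satisfies $x^R_q=\operatorname{argmin}_{z\in\mathcal{K}_{2q}(A,b)}\|b-Az\|=\operatorname{argmin}_{z\in\mathcal{K}_{2q+1}(A,b)}\|b-Az\|$; that is, with $x^M_m=\operatorname{argmin}_{z\in\mathcal{K}_m(A,b)}\|b-Az\|$ the minimum residual iterates, $x^M_{2q+1}=x^M_{2q}=x^R_q$.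
   Context: For a matrix $B$, a vector $c$ and an integer $m\ge 0$, the Krylov subspace is $\mathcal{K}_m(B,c)=\operatorname{span}\{c,Bc,\ldots,B^{m-1}c\}$ (with $\mathcal{K}_0(B,c)=\{0\}$). $\|\cdot\|$ denotes the Euclidean norm. The minimum residual iterate over a subspace is unique since $A$ is nonsingular. *)

(* Defs.v *)
From HB Require Import structures.
From mathcomp Require Import all_boot all_order all_algebra.
Set Implicit Arguments. Unset Strict Implicit. Unset Printing Implicit Defensive.
Import Order.TTheory GRing.Theory Num.Theory.
Local Open Scope ring_scope.

(* Krylov subspace K_m(B,c) = span{c, Bc, ..., B^(m-1) c}, as a membership
   predicate; K_0(B,c) = {0} (empty sum). *)
Definition krylov (R : rcfType) (n m : nat) (B : 'M[R]_n) (c : 'cV[R]_n)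
  (x : 'cV[R]_n) : Prop :=
  exists a : 'I_m -> R, x = \sum_(i < m) a i *: (B ^+ i *m c).

Definition enorm (R : rcfType) (n : nat) (v : 'cV[R]_n) : R :=
  Num.sqrt (\sum_(i < n) v i 0 ^+ 2).

Definition orth_residual (R : rcfType) (n : nat) (S : 'cV[R]_n -> Prop)
  (A : 'M[R]_n) (b x : 'cV[R]_n) : Prop :=
  forall p, S p -> (p^T *m (b - A *m x)) = 0.

Definition is_minres (R : rcfType) (n : nat) (S : 'cV[R]_n -> Prop)
  (A : 'M[R]_n) (b x : 'cV[R]_n) : Prop :=
  S x /\ forall z, S z -> enorm (b - A *m x) <= enorm (b - A *m z).

(* Main.v *)
Require Import Defs.
From HB Require Import structures.
From mathcomp Require Import all_boot all_order all_algebra.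
From mathcomp Require Import lra.
Import Order.TTheory GRing.Theory Num.Theory.
Set Implicit Arguments. Unset Strict Implicit. Unset Printing Implicit Defensive.
Local Open Scope ring_scope.

Section LS.
Variable R : rcfType.

Lemma rowsq0 (k : nat) (u : 'rV[R]_k) : u *m u^T = 0 -> u = 0.
Proof.
move=> /matrixP /(_ 0 0); rewrite !mxE => H.
have Hnn : forall j : 'I_k, predT j -> 0 <= u 0 j * u^T j 0.
  by move=> j _; rewrite mxE; by rewrite -expr2 sqr_ge0.
have H2 := psumr_eq0P Hnn H.
apply/matrixP => i j; rewrite mxE (ord1 i).
by have := H2 j isT; rewrite /= mxE => /eqP; rewrite mulf_eq0 orbb => /eqP.
Qed.

Lemma ls_exists (n k : nat) (M : 'M[R]_(n, k)) (v : 'cV[R]_n) :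
  exists a : 'cV[R]_k, M^T *m (v - M *m a) = 0.
Proof.
have Hcap : (M^T :&: kermx M = 0)%MS.
  apply/row_matrixP => i; rewrite row0.
  have : (row i (M^T :&: kermx M) <= M^T :&: kermx M)%MS by exact: row_sub.
  rewrite sub_capmx => /andP[/submxP[w ->] /sub_kermxP Hk].
  apply: rowsq0.
  by rewrite trmx_mul trmxK !mulmxA Hk !mul0mx.
have Hr : \rank (M^T *m M) = \rank M.
  have := mxrank_mul_ker M^T M; rewrite Hcap mxrank0 addn0 mxrank_tr //.
have Hsub : (M <= M^T *m M)%MS.
  have := mxrank_leqif_sup (submxMl M^T M); rewrite Hr => [[_]].
  by rewrite eqxx => /esym.
have : (v^T *m M <= M^T *m M)%MS by exact: submx_trans (submxMl _ _) Hsub.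
case/submxP => D HD.
exists D^T.
rewrite mulmxBr.
have -> : M^T *m v = (v^T *m M)^T by rewrite trmx_mul trmxK.
by rewrite HD trmx_mul trmx_mul trmxK mulmxA subrr.
Qed.
End LS.

Section Dot.
Variables (R : rcfType) (n : nat).
Implicit Types u v w : 'cV[R]_n.

Definition dot u v : R := \sum_k u k 0 * v k 0.

Lemma dotE u v : (u^T *m v) 0 0 = dot u v.
Proof. by rewrite mxE; apply: eq_bigr => k _; rewrite mxE. Qed.

Lemma dotC u v : dot u v = dot v u.
Proof. by apply: eq_bigr => k _; rewrite mulrC. Qed.

Lemma dotDl u v w : dot (u + v) w = dot u w + dot v w.
Proof. by rewrite /dot -big_split; apply: eq_bigr => k _; rewrite mxE mulrDl. Qed.

Lemma dotZl a u v : dot (a *: u) v = a * dot u v.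
Proof. by rewrite /dot mulr_sumr; apply: eq_bigr => k _; rewrite mxE mulrA. Qed.

Lemma dotNl u v : dot (- u) v = - dot u v.
Proof. by rewrite -scaleN1r dotZl mulN1r. Qed.

Lemma dot0l v : dot 0 v = 0.
Proof. by rewrite -(scale0r (0 : 'cV[R]_n)) dotZl mul0r. Qed.

Lemma dotBl u v w : dot (u - v) w = dot u w - dot v w.
Proof. by rewrite dotDl dotNl. Qed.

Lemma dotDr u v w : dot w (u + v) = dot w u + dot w v.
Proof. by rewrite dotC dotDl !(dotC w). Qed.
Lemma dotZr a u v : dot v (a *: u) = a * dot v u.
Proof. by rewrite dotC dotZl dotC. Qed.
Lemma dotNr u v : dot v (- u) = - dot v u.
Proof. by rewrite dotC dotNl dotC. Qed.
Lemma dotBr u v w : dot w (u - v) = dot w u - dot w v.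
Proof. by rewrite dotDr dotNr. Qed.
Lemma dot0r v : dot v 0 = 0.
Proof. by rewrite dotC dot0l. Qed.

Lemma dot_suml m (a : nat -> R) (F : nat -> 'cV[R]_n) v :
  dot (\sum_(0 <= i < m) a i *: F i) v = \sum_(0 <= i < m) a i * dot (F i) v.
Proof.
elim: m => [|m IH]; first by rewrite !big_nil dot0l.
by rewrite !big_nat_recr //= dotDl IH dotZl.
Qed.

Lemma dot_sumr m (a : nat -> R) (F : nat -> 'cV[R]_n) v :
  dot v (\sum_(0 <= i < m) a i *: F i) = \sum_(0 <= i < m) a i * dot v (F i).
Proof. by rewrite dotC dot_suml; apply: eq_bigr => i _; rewrite dotC. Qed.

Lemma dot_ge0 u : 0 <= dot u u.
Proof. by apply: sumr_ge0 => k _; rewrite -expr2 sqr_ge0. Qed.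

Lemma dot_eq0 u : dot u u = 0 -> u = 0.
Proof.
move=> H; suff Hu : u^T = 0 by rewrite -(trmxK u) Hu trmx0.
apply: rowsq0; apply/matrixP => i' j'; rewrite (ord1 i') (ord1 j') trmxK dotE H.
by rewrite mxE.
Qed.

Lemma mx11_eq0 (X : 'M[R]_1) : X 0 0 = 0 -> X = 0.
Proof. by move=> H; apply/matrixP => i j; rewrite (ord1 i) (ord1 j) H mxE. Qed.

Lemma enormE v : enorm v = Num.sqrt (dot v v).
Proof. by rewrite /enorm; congr Num.sqrt; apply: eq_bigr => k _; rewrite expr2. Qed.

Lemma enorm_le u v : dot u u <= dot v v -> enorm u <= enorm v.
Proof. by move=> H; rewrite !enormE ler_sqrt // dot_ge0. Qed.

Lemma pyth u w : dot u w = 0 -> dot u u <= dot (u + w) (u + w).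
Proof.
move=> H; rewrite dotDl !dotDr H (dotC w u) H addr0 add0r lerDl; exact: dot_ge0.
Qed.

Lemma sum_sub m (a c : nat -> R) (F : nat -> 'cV[R]_n) :
  \sum_(0 <= i < m) (a i - c i) *: F i =
  \sum_(0 <= i < m) a i *: F i - \sum_(0 <= i < m) c i *: F i.
Proof. by rewrite -sumrB; apply: eq_bigr => i _; rewrite scalerBl. Qed.

Lemma sum_opp m (a : nat -> R) (F : nat -> 'cV[R]_n) :
  \sum_(0 <= i < m) (- a i) *: F i = - \sum_(0 <= i < m) a i *: F i.
Proof. by rewrite -sumrN; apply: eq_bigr => i _; rewrite scaleNr. Qed.

Lemma sum_zero m (F : nat -> 'cV[R]_n) :
  \sum_(0 <= i < m) (0 : R) *: F i = 0.
Proof. by rewrite big1 // => i _; rewrite scale0r. Qed.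

Lemma ls_sum (F : nat -> 'cV[R]_n) q v : exists d : nat -> R,
  forall j, (j < q)%N -> dot (F j) (v - \sum_(0 <= i < q) d i *: F i) = 0.
Proof.
pose M := \matrix_(i < n, j < q) F j i 0.
have [a Ha] := @ls_exists _ _ _ M v.
pose d j := oapp (fun k : 'I_q => a k 0) 0 (insub j).
exists d => j hj.
have -> : \sum_(0 <= i < q) d i *: F i = M *m a.
  rewrite big_mkord; apply/matrixP => r c; rewrite (ord1 c) summxE mxE.
  by apply: eq_bigr => k _; rewrite !mxE /d valK /= mulrC.
transitivity ((M^T *m (v - M *m a)) (Ordinal hj) 0); last by rewrite Ha mxE.
by rewrite mxE; apply: eq_bigr => k _; rewrite !mxE.
Qed.
End Dot.

Section Main.
Variables (R : rcfType) (n : nat) (A : 'M[R]_n) (b : 'cV[R]_n).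
Hypothesis hskew : A^T = - A.

Definition f i := A ^+ i *m b.

Lemma fS i : f i.+1 = A *m f i.
Proof. by rewrite /f exprS -mulmxE mulmxA. Qed.

Lemma dot_skew (u v : 'cV[R]_n) : dot u (A *m v) = - dot (A *m u) v.
Proof.
rewrite -!dotE trmx_mul hskew mulmxN mulNmx mulmxA.
by rewrite [in RHS]mxE opprK.
Qed.

Lemma f0 : f 0 = b.
Proof. by rewrite /f expr0 mul1mx. Qed.

Lemma gram_sign i j : dot (f i) (f j) = (-1) ^+ i * dot b (f (i + j)).
Proof.
elim: i j => [|i IH] j; first by rewrite expr0 mul1r f0.
rewrite fS -[dot _ _]opprK -dot_skew -fS IH exprS mulN1r mulNr addnS addSn.
by [].
Qed.
Lemma gram i j : odd (i + j) -> dot (f i) (f j) = 0.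
Proof.
move=> Hij; have h1 := gram_sign i j; have h2 := gram_sign j i.
rewrite dotC addnC in h2.
rewrite h1 in h2 *; move: h2 Hij.
rewrite -!(signr_odd _ i) -!(signr_odd _ j) oddD.
set s := dot b _.
by case: (odd i); case: (odd j) => //= h _; rewrite ?expr1 ?expr0 in h *; lra.
Qed.

Definition Sm (sig : nat -> nat) m (a : nat -> R) :=
  \sum_(0 <= i < m) a i *: f (sig i).

Lemma A_Sm sig m a : A *m Sm sig m a = Sm (fun i => (sig i).+1) m a.
Proof.
rewrite /Sm mulmx_sumr; apply: eq_bigr => i _; by rewrite fS -scalemxAr.
Qed.

Lemma orthS sig tau m m' a c : (forall i j, odd (sig i + tau j)) ->
  dot (Sm sig m a) (Sm tau m' c) = 0.
Proof.
move=> H; rewrite /Sm dot_suml big1 // => i _.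
by rewrite dot_sumr big1 ?mulr0 // => j _; rewrite gram ?mulr0.
Qed.

Lemma b_Sm : b = Sm (fun _ => 0%N) 1 (fun _ => 1).
Proof. by rewrite /Sm big_nat1 scale1r f0. Qed.

Lemma krylov_spn m (B : 'M[R]_n) c x : krylov m B c x <->
  exists a : nat -> R, x = \sum_(0 <= i < m) a i *: (B ^+ i *m c).
Proof.
split=> [[a ->]|[a ->]].
  exists (fun k => oapp a 0 (insub k : option 'I_m)).
  by rewrite big_mkord; apply: eq_bigr => i _; rewrite valK.
by exists (fun i : 'I_m => a i); rewrite big_mkord.
Qed.

Lemma kA m x : krylov m A b x <-> exists a, x = Sm (fun i => i) m a.
Proof. exact: krylov_spn. Qed.

Lemma kEv q x : krylov q (A ^+ 2) b x <-> exists a, x = Sm (fun j => 2 * j)%N q a.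
Proof.
rewrite krylov_spn /Sm.
have E : forall a : nat -> R, \sum_(0 <= i < q) a i *: ((A ^+ 2) ^+ i *m b)
   = \sum_(0 <= i < q) a i *: f (2 * i)%N.
  by move=> a; apply: eq_bigr => i _; rewrite /f exprM.
by split=> [[a ->]|[a ->]]; exists a; rewrite E.
Qed.

Lemma kOd q x : krylov q (A ^+ 2) (A *m b) x <->
  exists a, x = Sm (fun j => (2 * j).+1)%N q a.
Proof.
rewrite krylov_spn /Sm.
have E : forall a : nat -> R, \sum_(0 <= i < q) a i *: ((A ^+ 2) ^+ i *m (A *m b))
   = \sum_(0 <= i < q) a i *: f (2 * i).+1%N.
  by move=> a; apply: eq_bigr => i _; rewrite /f [A ^+ (2 * i).+1]exprSr -mulmxE -mulmxA exprM.
by split=> [[a ->]|[a ->]]; exists a; rewrite E.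
Qed.

Lemma split2 (V : zmodType) (G : nat -> V) q :
  \sum_(0 <= i < 2 * q) G i =
  \sum_(0 <= j < q) G (2 * j)%N + \sum_(0 <= j < q) G (2 * j).+1.
Proof.
elim: q => [|q IH]; first by rewrite muln0 !big_nil addr0.
rewrite mulnSr addn2 !big_nat_recr //= IH -addrA addrACA.
by [].
Qed.

Lemma half_od j : ((2 * j).+1)./2 = j.
Proof. by rewrite mul2n -[_.+1]/(true + j.*2)%N half_bit_double. Qed.
Lemma half_ev j : ((2 * j))./2 = j.
Proof. by rewrite mul2n doubleK. Qed.
Lemma odd_ev j : odd (2 * j) = false.
Proof. by rewrite oddM. Qed.
Lemma odd_od j : odd (2 * j).+1 = true.
Proof. by rewrite /= odd_ev. Qed.

Lemma spn2 q x : (exists a, x = Sm (fun i => i) (2 * q) a) <->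
  exists c d, x = Sm (fun j => 2 * j)%N q c + Sm (fun j => (2 * j).+1)%N q d.
Proof.
split=> [[a ->]|[c [d ->]]].
  by exists (fun j => a (2 * j)%N), (fun j => a (2 * j).+1); rewrite /Sm split2.
exists (fun i => if odd i then d i./2 else c i./2); rewrite /Sm split2.
congr (_ + _); apply: eq_bigr => j _.
  by rewrite odd_ev half_ev.
by rewrite odd_od half_od.
Qed.

Lemma spn2' q x : (exists a, x = Sm (fun i => i) (2 * q).+1 a) <->
  exists c d, x = Sm (fun j => 2 * j)%N q.+1 c + Sm (fun j => (2 * j).+1)%N q d.
Proof.
split=> [[a ->]|[c [d ->]]].
  exists (fun j => a (2 * j)%N), (fun j => a (2 * j).+1).
  by rewrite /Sm big_nat_recr // split2 big_nat_recr // addrAC.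
exists (fun i => if odd i then d i./2 else c i./2).
rewrite /Sm big_nat_recr // [in RHS]big_nat_recr // split2 addrAC odd_ev half_ev.
congr (_ + _ + _); apply: eq_bigr => j _.
  by rewrite odd_ev half_ev.
by rewrite odd_od half_od.
Qed.

Lemma spn_mono m x : (exists a, x = Sm (fun i => i) m a) ->
  exists a, x = Sm (fun i => i) m.+1 a.
Proof.
move=> [a ->]; exists (fun i => if (i < m)%N then a i else 0).
rewrite /Sm big_nat_recr //= ltnn scale0r addr0.
by apply: eq_big_nat => i /andP[_ ->].
Qed.

Lemma orth_dot S x : orth_residual S A b x <->
  forall p, S p -> dot p (b - A *m x) = 0.
Proof.
split=> H p Sp.
  by rewrite -dotE H // mxE.
by apply: mx11_eq0; rewrite dotE H.
Qed.

Hypothesis hA : A \in unitmx.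

Local Notation ev := (fun j => 2 * j)%N.
Local Notation od := (fun j => (2 * j).+1)%N.

Lemma odd1 i j : odd ((2 * i).+1 + (2 * j).+2).
Proof. by rewrite oddD odd_od /= odd_ev. Qed.
Lemma odd2 i j : odd ((2 * i).+2 + (2 * j).+1).
Proof. by rewrite oddD odd_od /= odd_ev. Qed.
Lemma odd3 i : odd ((2 * i).+1 + 0).
Proof. by rewrite addn0 odd_od. Qed.
Lemma odd4 j : odd (0 + (2 * j).+1).
Proof. by rewrite add0n odd_od. Qed.

Lemma part_i_ex q : exists x, krylov q (A ^+ 2) (A *m b) x /\ orth_residual (krylov q (A ^+ 2) b) A b x.
Proof.
have [d Hd] := ls_sum (fun j => f (2 * j).+1) q (- (invmx A *m b)).
exists (Sm od q (fun j => - d j)); split; first by apply/kOd; eexists.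
apply/orth_dot => p /kEv [c ->].
rewrite /Sm dot_suml big_mkord big1 // => j _.
have Hj := Hd j (ltn_ord j).
rewrite fS -[dot _ _]opprK -dot_skew in Hj.
rewrite -/(Sm od q d) in Hj.
rewrite -/(Sm od q (fun j => - d j)) /Sm sum_opp -/(Sm od q d).
set w := (- (invmx A *m b) - Sm od q d) in Hj.
have -> : b - A *m - Sm od q d = - (A *m w).
  rewrite /w mulmxBr !mulmxN mulmxA mulmxV // mul1mx opprD !opprK.
  by [].
by rewrite dotNr Hj mulr0.
Qed.
Lemma Sm0 sig m : Sm sig m (fun _ => 0) = 0.
Proof. exact: sum_zero. Qed.

Lemma x_in2q q d : krylov (2 * q) A b (Sm od q d).
Proof.
apply/kA/spn2; exists (fun _ => 0), d.
by rewrite Sm0 add0r.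
Qed.

Lemma part_i_orth q d :
  orth_residual (krylov q (A ^+ 2) b) A b (Sm od q d) ->
  orth_residual (krylov (2 * q) A b) A b (Sm od q d).
Proof.
move/orth_dot => Ho; apply/orth_dot => p /kA/spn2 [c [e ->]].
rewrite dotDl Ho; last by apply/kEv; eexists.
rewrite dotBr A_Sm {1}b_Sm !orthS ?subrr ?add0r //.
  by move=> i j; exact: odd1.
by move=> i j; exact: odd3.
Qed.

Lemma part_i_uniq q d y :
  orth_residual (krylov q (A ^+ 2) b) A b (Sm od q d) ->
  krylov (2 * q) A b y ->
  orth_residual (krylov (2 * q) A b) A b y -> y = Sm od q d.
Proof.
move=> /part_i_orth /orth_dot Hx Hy /orth_dot Hoy.
have Hz : forall p, krylov (2 * q) A b p -> dot p (A *m (y - Sm od q d)) = 0.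
  move=> p Kp; rewrite (_ : A *m (y - Sm od q d) =
     (b - A *m Sm od q d) - (b - A *m y)); last first.
    by rewrite mulmxBr opprB [RHS]addrC addrA subrK.
  by rewrite dotBr Hx // Hoy // subrr.
move/kA/spn2: Hy => [c [e Hy]].
have Eyx : y - Sm od q d = Sm ev q c + Sm od q (fun j => e j - d j).
  by rewrite Hy /Sm sum_sub addrA.
rewrite Eyx in Hz.
set w := Sm ev q c in Hz; set v := Sm od q (fun j => e j - d j) in Hz.
have Hw1 : A *m w = Sm od q c by rewrite A_Sm.
have Hv1 : A *m v = Sm (fun i => (2 * i).+2) q (fun j => e j - d j) by rewrite A_Sm.
have Hw : w = 0.
  have Kw : krylov (2 * q) A b (A *m w).
    by rewrite Hw1; apply/kA/spn2; exists (fun _ => 0), c; rewrite Sm0 add0r.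
  have := Hz _ Kw; rewrite mulmxDr dotDr Hv1 [in X in _ + X]Hw1 orthS; last first.
    by move=> i j; exact: odd1.
  rewrite addr0 => /dot_eq0 H1.
  by rewrite -(mulKmx hA w) H1 mulmx0.
have Hv : v = 0.
  have Kv : krylov (2 * q) A b (Sm ev q (fun j => e j - d j)).
    by apply/kA/spn2; exists (fun j => e j - d j), (fun _ => 0); rewrite Sm0 addr0.
  have Ev : v = A *m Sm ev q (fun j => e j - d j) by rewrite A_Sm.
  have := Hz _ Kv; rewrite Hw add0r Ev dot_skew => /eqP; rewrite oppr_eq0 => /eqP.
  by move/dot_eq0.
by apply/eqP; rewrite -subr_eq0 Eyx -/w -/v Hw Hv addr0.
Qed.
Lemma part_ii_ex q : exists x, is_minres (krylov q (A ^+ 2) (A *m b)) A b x.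
Proof.
have [d Hd] := ls_sum (fun j => f (2 * j).+2) q b.
exists (Sm od q d); split; first by apply/kOd; eexists.
move=> z /kOd [e ->]; apply: enorm_le; rewrite !A_Sm.
have -> : b - Sm (fun i => (2 * i).+2) q e =
   (b - Sm (fun i => (2 * i).+2) q d) +
   Sm (fun i => (2 * i).+2) q (fun j => d j - e j).
  by rewrite /Sm sum_sub addrA subrK.
apply: pyth; rewrite /Sm dot_sumr big_mkord big1 // => j _.
by rewrite dotC Hd ?mulr0.
Qed.

Lemma part_ii_odd q d :
  is_minres (krylov q (A ^+ 2) (A *m b)) A b (Sm od q d) ->
  is_minres (krylov (2 * q).+1 A b) A b (Sm od q d).
Proof.
move=> [_ Hmin]; split.
  by apply/kA/spn2'; exists (fun _ => 0), d; rewrite Sm0 add0r.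
move=> z /kA/spn2' [c [e ->]].
apply: le_trans (Hmin (Sm od q e) _) _; first by apply/kOd; eexists.
apply: enorm_le.
rewrite (_ : b - A *m (Sm ev q.+1 c + Sm od q e) =
   (b - A *m Sm od q e) + - (A *m Sm ev q.+1 c)); last first.
  by rewrite mulmxDr opprD addrA addrAC.
apply: pyth; rewrite !A_Sm dotNr dotBl {1}b_Sm !orthS ?subrr ?oppr0 //.
  by move=> i j; exact: odd2.
by move=> i j; exact: odd4.
Qed.

Lemma part_ii_even q d :
  is_minres (krylov q (A ^+ 2) (A *m b)) A b (Sm od q d) ->
  is_minres (krylov (2 * q) A b) A b (Sm od q d).
Proof.
move=> H; have [_ Hm] := part_ii_odd H; split; first exact: x_in2q.
by move=> z /kA /spn_mono /kA Kz; exact: Hm.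
Qed.

Lemma main_thm q :
  ((exists x, krylov q (A ^+ 2) (A *m b) x /\
              orth_residual (krylov q (A ^+ 2) b) A b x) /\
   forall x, krylov q (A ^+ 2) (A *m b) x ->
             orth_residual (krylov q (A ^+ 2) b) A b x ->
     krylov (2 * q) A b x /\
     orth_residual (krylov (2 * q) A b) A b x /\
     (forall y, krylov (2 * q) A b y ->
                orth_residual (krylov (2 * q) A b) A b y -> y = x)) /\
  ((exists x, is_minres (krylov q (A ^+ 2) (A *m b)) A b x) /\
   forall x, is_minres (krylov q (A ^+ 2) (A *m b)) A b x ->
     is_minres (krylov (2 * q) A b) A b x /\
     is_minres (krylov (2 * q).+1 A b) A b x).
Proof.
split; split.
- exact: part_i_ex.
- move=> x /kOd [d ->] Ho; split; first exact: x_in2q.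
  split; first exact: part_i_orth.
  by move=> y Ky Oy; exact: part_i_uniq.
- exact: part_ii_ex.
- move=> x H; have Hk := H.1; move/kOd: Hk => [d Ex]; rewrite Ex in H *.
  by split; [exact: part_ii_even | exact: part_ii_odd].
Qed.
End Main.



Theorem theorem1 (R : rcfType) (n : nat) (A : 'M[R]_n) (b : 'cV[R]_n)
  (hA : A \in unitmx) (hskew : A^T = - A) (q : nat) :
  (* (i) CGNE iterate: exists, lies in K_2q(A,b), satisfies the Galerkin
     condition on K_2q(A,b), and equals the Galerkin iterate x^G_2q *)
  ((exists x, krylov q (A ^+ 2) (A *m b) x /\
              orth_residual (krylov q (A ^+ 2) b) A b x) /\
   forall x, krylov q (A ^+ 2) (A *m b) x ->
             orth_residual (krylov q (A ^+ 2) b) A b x ->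
     krylov (2 * q) A b x /\
     orth_residual (krylov (2 * q) A b) A b x /\
     (forall y, krylov (2 * q) A b y ->
                orth_residual (krylov (2 * q) A b) A b y -> y = x)) /\
  (* (ii) CGNR iterate: exists and equals x^M_2q and x^M_(2q+1) *)
  ((exists x, is_minres (krylov q (A ^+ 2) (A *m b)) A b x) /\
   forall x, is_minres (krylov q (A ^+ 2) (A *m b)) A b x ->
     is_minres (krylov (2 * q) A b) A b x /\
     is_minres (krylov (2 * q).+1 A b) A b x).
Proof. exact: main_thm. Qed.
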